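(* Fix $r\ge1$. For $K>r$ and $\theta>0$, let $V_1,\dots,V_{K-1}$ be independent with $V_i\sim\mathrm{Beta}(\frac{\theta}{K}+1,(K-i)\frac{\theta}{K})$, and set $Y_1^K=V_1$, $Y_i^K=(1-V_1)\cdots(1-V_{i-1})V_i$ for $2\le i\le K-1$. For fixed $K$, as $\theta\to\infty$ the laws of $(Y_1^K,\dots,Y_r^K)$ satisfy an LDP on $\Delta_r=\{(y_1,\dots,y_r): y_k\ge0,\ \sum_k y_k\le1\}$ with speed $\theta$ and some rate function $J_r^K$. Likewise, with $X_1=U_1$, $X_n=(1-U_1)\cdots(1-U_{n-1})U_n$ for i.i.d. $U_k\sim\mathrm{Beta}(1,\theta)$, the laws of $(X_1,\dots,X_r)$ satisfy an LDP on $\Delta_r$ with speed $\theta$ and rate function $S_r(x_1,\dots,x_r)=\log\frac{1}{1-\sum_{k=1}^r x_k}$ if $\sum_{k=1}^r x_k<1$ and $\infty$ otherwise. Then the rate functions $J_r^K$ do not converge to $S_r$ as $K\to\infty$; that is, there is a point $\mathbf x\in\Delta_r$ with $\lim_{K\to\infty}J_r^K(\mathbf x)\neq S_r(\mathbf x)$.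
   Context: $(Y_1^K,\dots,Y_{K-1}^K)$ is the size-biased sampling of a symmetric $\mathrm{Dirichlet}(\theta/K,\dots,\theta/K)$ distribution; $(X_1,X_2,\dots)$ is the GEM representation. An LDP with speed $\theta$ refers to normalization $\theta^{-1}\log$ as $\theta\to\infty$. *)

(* Defs.v *)
From HB Require Import structures.
From mathcomp Require Import all_boot all_order all_algebra.
From mathcomp Require Import all_classical all_reals all_analysis.
Unset Printing Implicit Defensive.
Import Order.TTheory GRing.Theory Num.Theory.
Import numFieldNormedType.Exports.
Local Open Scope classical_set_scope.
Local Open Scope ring_scope.

Section Defs.
Context {R : realType}.

Definition beta_const (a b : R) : R :=
  fine (\int[lebesgue_measure]_(x in `[0%R, 1%R]) (powR x (a - 1) * powR (1 - x) (b - 1))%:E)%E.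

Definition beta_density (a b : R) (x : R) : R :=
  powR x (a - 1) * powR (1 - x) (b - 1) / beta_const a b.

Definition has_beta_law {d} {T : measurableType d} (P : probability T R)
  (X : T -> R) (a b : R) : Prop :=
  forall A : set R, measurable A ->
    P (X @^-1` A) =
    (\int[lebesgue_measure]_(x in A `&` `[0%R, 1%R]) (beta_density a b x)%:E)%E.

(* mutual independence of a finite family of real random variables:
   product rule for all families of Borel sets (taking B i = setT recovers
   every subfamily). *)
Definition mutually_independent {d} {T : measurableType d} (P : probability T R)
  {n : nat} (X : 'I_n -> T -> R) : Prop :=
  (forall i, measurable_fun setT (X i)) /\
  forall B : 'I_n -> set R, (forall i, measurable (B i)) ->
    P (\bigcap_(i in [set: 'I_n]) (X i @^-1` B i)) =
    (\prod_(i < n) P (X i @^-1` B i))%E.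

(* stick breaking: Y_j = V_j * prod_{l<j} (1 - V_l)  (0-based indices) *)
Definition stick {T} (V : nat -> T -> R) (j : nat) (w : T) : R :=
  V j w * \prod_(l < j) (1 - V l w).

Definition stick_vec {T} (r : nat) (V : nat -> T -> R) (w : T) : 'rV[R]_r :=
  \row_(j < r) stick V j w.

(* mu is the law of (Y_1^K,...,Y_r^K) with parameter theta:
   V_1,...,V_{K-1} independent, V_i ~ Beta(theta/K + 1, (K-i) theta/K)
   (paper index i = j+1 for the 0-based index j used here). *)
Definition is_law_Y (K r : nat) (theta : R) (mu : set 'rV[R]_r -> \bar R) : Prop :=
  exists (d : measure_display) (T : measurableType d) (P : probability T R)
         (V : nat -> T -> R),
    mutually_independent P (fun i : 'I_K.-1 => V i) /\
    (forall j, (j < K.-1)%N ->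
       has_beta_law P (V j) (theta / K%:R + 1) ((K - j.+1)%:R * theta / K%:R)) /\
    (forall A, mu A = P (stick_vec r V @^-1` A)).

Definition simplex (r : nat) : set 'rV[R]_r :=
  [set y | (forall i, 0 <= y ord0 i) /\ \sum_(i < r) y ord0 i <= 1].

Definition S_rate {r : nat} (x : 'rV[R]_r) : \bar R :=
  if \sum_(i < r) x ord0 i < 1 then (ln ((1 - \sum_(i < r) x ord0 i)^-1))%:E
  else +oo%E.

Definition scaled_log {r : nat} (mu : R -> set 'rV[R]_r -> \bar R)
  (A : set 'rV[R]_r) (theta : R) : \bar R :=
  ((theta^-1)%:E * lne (mu theta A))%E.

(* LDP on the (closed) subspace D of R^r, speed theta -> +oo, rate function I
   (nonnegative, lower semicontinuous on D, i.e. closed level sets in D).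
   Closed (resp. open) subsets of D are F `&` D with F closed (resp. open). *)
Definition LDP_on {r : nat} (D : set 'rV[R]_r) (mu : R -> set 'rV[R]_r -> \bar R)
  (I : 'rV[R]_r -> \bar R) : Prop :=
  [/\ (forall x, D x -> (0 <= I x)%E),
      (forall a : R, closed (D `&` [set x | (I x <= a%:E)%E])),
      (forall F, closed F ->
         (limf_esup (scaled_log mu (F `&` D)) (pinfty_nbhs R)
            <= - ereal_inf (I @` (F `&` D)))%E) &
      (forall G, open G ->
         (- ereal_inf (I @` (G `&` D))
            <= limf_einf (scaled_log mu (G `&` D)) (pinfty_nbhs R))%E)].

End Defs.

(* Main.v *)
Require Import Defs.
From HB Require Import structures.
From mathcomp Require Import all_boot all_order all_algebra.
From mathcomp Require Import all_classical all_reals all_analysis.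
From mathcomp Require Import measurable_realfun.
From mathcomp Require Import ring lra.
Import Order.TTheory GRing.Theory Num.Theory.
Import numFieldNormedType.Exports.
Local Open Scope classical_set_scope.
Local Open Scope ring_scope.
Section B.
Context {R : realType}.
Local Notation mu := (@lebesgue_measure R).
Definition gf (a b : R) (x : R) := powR x (a - 1) * powR (1 - x) (b - 1).

Lemma gf_mes a b : measurable_fun setT (gf a b).
Proof.
apply: measurable_funM; first exact: measurable_powR.
apply: (measurableT_comp (measurable_powR _)).
apply: measurable_funB => //.
Qed.

Lemma gf_ge0 a b x : 0 <= gf a b x.
Proof. by rewrite /gf mulr_ge0 ?powR_ge0. Qed.

Lemma powR_le1 (y p : R) : 0 <= y <= 1 -> 0 <= p -> powR y p <= 1.
Proof.
move=> /andP[y0 y1] p0.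
by have := @ge0_ler_powR R p p0 y 1; rewrite powR1; apply => //; rewrite nnegrE.
Qed.

Lemma powRn_dec (y z p : R) : 0 < y -> y <= z -> p <= 0 -> powR z p <= powR y p.
Proof.
move=> y0 yz p0.
have z0 : 0 < z by apply: lt_le_trans yz.
rewrite /powR !gt_eqF// ler_expR ler_wnM2l// ler_ln// posrE.
Qed.

Lemma powRX (y p : R) n : 0 <= y -> powR (y ^+ n) p = (powR y p) ^+ n.
Proof.
move=> y0; elim: n => [|n IH]; first by rewrite !expr0 powR1.
by rewrite !exprS powRM ?exprn_ge0// IH.
Qed.

Lemma powR_lt1 (y p : R) : 0 < y < 1 -> 0 < p -> powR y p < 1.
Proof.
move=> /andP[y0 y1] p0.
rewrite /powR gt_eqF// -expR0 ltr_expR pmulr_rlt0// ln_lt0 //.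
by rewrite y0 y1.
Qed.
End B.


Section D.
Context {R : realType}.
Definition ee (k : nat) : R := (2^-1) ^+ k.
Lemma ee_gt0 k : 0 < ee k. Proof. by rewrite exprn_gt0. Qed.
Lemma half_ge0 : 0 <= (2^-1 : R). Proof. by rewrite invr_ge0 ler0n. Qed.
Lemma half_le1 : (2^-1 : R) <= 1. Proof. by rewrite invf_le1// ler1n. Qed.
Lemma ee_le1 k : ee k <= 1. Proof. by rewrite exprn_ile1 ?half_ge0 ?half_le1. Qed.
Lemma ee_S k : ee k.+1 = ee k / 2. Proof. by rewrite /ee exprSr. Qed.
Lemma ee_ltS k : ee k.+1 < ee k.
Proof. by rewrite ee_S ltr_pdivrMr// ltr_pMr ?ee_gt0// ltr1n. Qed.
Lemma ee_mono i j : (i <= j)%N -> ee j <= ee i.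
Proof.
move=> ij; rewrite /ee -(subnKC ij) exprD ler_piMr ?exprn_ge0 ?half_ge0//.
by rewrite exprn_ile1 ?half_ge0 ?half_le1.
Qed.

Definition Fk (k : nat) : set R := [set` `[1 - ee k, 1 - ee k.+1[ ].

Lemma Fk_cover : \bigcup_k Fk k = [set` `[0, 1[ ] :> set R.
Proof.
apply/seteqP; split => x /=.
  move=> [k _]; rewrite /Fk /= !in_itv /= => /andP[h1 h2].
  rewrite (le_trans _ h1) ?subr_ge0 ?ee_le1//=.
  by rewrite (lt_le_trans h2)// lerBlDr lerDl ltW// ee_gt0.
rewrite in_itv /= => /andP[x0 x1].
set t := 1 - x.
have t0 : 0 < t by rewrite subr_gt0.
have ex : exists n, ee n.+1 < t.
  have cv : (GRing.exp (2^-1 : R) : R^nat) @ \oo --> 0.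
    by apply: cvg_expr; rewrite ger0_norm ?half_ge0// invf_lt1// ltr1n.
  move/cvgr_dist_lt: cv => /(_ t t0) [N _ HN].
  exists N; have := HN N.+1 (leqnSn N).
  by rewrite sub0r normrN ger0_norm ?exprn_ge0 ?half_ge0.
case: (ex_minnP ex) => m Pm minm.
exists m => //; rewrite /Fk /= in_itv /=; apply/andP; split.
  case: m Pm minm => [|m] Pm minm.
    by rewrite /ee expr0 subrr.
  rewrite lerBlDr -lerBlDl -/t.
  rewrite leNgt; apply/negP => /minm; by rewrite ltnn.
by rewrite ltrBrDr -ltrBrDl -/t.
Qed.

Lemma Fk_triv : trivIset setT Fk.
Proof.
apply/trivIsetP => i j _ _ ij.
wlog lij : i j ij / (i < j)%N.
  move=> H; case: (ltngtP i j) => [l|l|e]; first exact: H.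
    by rewrite setIC; apply: H => //; rewrite eq_sym.
  by rewrite e eqxx in ij.
apply/seteqP; split => x //=; rewrite /Fk /= !in_itv /= => -[/andP[_ h1] /andP[h2 _]].
have := lt_le_trans h1 (le_trans (lerB (lexx 1) (ee_mono _ _ lij)) h2).
by rewrite ltxx.
Qed.
End D.


Section E.
Context {R : realType}.
Local Notation mu := (@lebesgue_measure R).

Lemma geo_fin (rho : R) : 0 <= rho < 1 ->
  (\sum_(i <oo) ((rho ^+ i.+1)%:E) < +oo)%E.
Proof.
move=> /andP[r0 r1].
have -> : (\sum_(i <oo) ((rho ^+ i.+1)%:E) = (rho * (1 - rho)^-1)%:E)%E.
  apply/cvg_lim => //.
  apply: cvg_EFin.
    by apply: nearW => n /=; rewrite sumEFin.
  rewrite [X in X @ _ --> _](_ : _ = series (geometric rho rho)); last first.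
    by apply/funext => n /=; rewrite sumEFin /series /=; apply: eq_bigr => i _; rewrite exprSr mulrC.
  by apply: cvg_geometric_series; rewrite ger0_norm.
by rewrite ltry.
Qed.

Lemma h_mes c : measurable_fun setT (fun x : R => powR (1 - x) c).
Proof.
apply: (measurableT_comp (measurable_powR _)).
exact: measurable_funB.
Qed.

Lemma int_h_fin c : -1 < c -> c < 0 ->
  (\int[mu]_(x in [set` `[0%R, 1%R[ ]) (powR (1 - x) c)%:E < +oo)%E.
Proof.
move=> c1 c0.
rewrite -Fk_cover ge0_integral_bigcup //; last 4 first.
- by move=> k; exact: measurable_itv.
- by apply/measurable_EFinP; apply: measurable_funTS; exact: h_mes.
- by move=> x _; rewrite lee_fin powR_ge0.
- exact: Fk_triv.
set q := powR (2^-1 : R) c.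
set rho := q * 2^-1.
have rhoE : rho = powR (2^-1) (c + 1).
  rewrite /rho /q powRD; last by apply/implyP => _; rewrite invr_eq0 pnatr_eq0.
  by rewrite powRr1// half_ge0.
have rho01 : 0 <= rho < 1.
  rewrite rhoE powR_ge0 /= powR_lt1 //; last by rewrite -ltrBlDr sub0r.
  by rewrite invr_gt0 ltr0n /= invf_lt1 // ltr1n.
apply: (le_lt_trans _ (geo_fin _ rho01)).
apply: lee_nneseries => [i _ _|i _].
  by apply: integral_ge0 => x _; rewrite lee_fin powR_ge0.
apply: (@le_trans _ _ (\int[mu]_(x in Fk i) (q ^+ i.+1)%:E)%E).
  apply: ge0_le_integral => //.
  - exact: measurable_itv.
  - by move=> x _; rewrite lee_fin powR_ge0.
  - by apply/measurable_EFinP; apply: measurable_funTS; exact: h_mes.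
  - move=> x; rewrite /Fk /= in_itv /= => /andP[_ h].
    rewrite lee_fin /q -powRX ?half_ge0 // -/(ee i.+1).
    apply: powRn_dec; [exact: ee_gt0| |exact: ltW].
    by rewrite ltW // ltrBrDl -ltrBrDr.
rewrite integral_cst; last exact: measurable_itv.
rewrite /Fk /= lebesgue_measure_itv /= lte_fin ltrD2l ltrN2 ee_ltS -EFinD -EFinM lee_fin.
have -> : (1 - ee i.+1 + - (1 - ee i) : R) = ee i.+1 by rewrite (ee_S i); lra.
by rewrite /rho exprMn.
Qed.
End E.


Section F.
Context {R : realType}.
Local Notation mu := (@lebesgue_measure R).

Lemma int_gf_fin (a b : R) : 1 <= a -> 0 < b ->
  (\int[mu]_(x in `[0%R, 1%R]) (gf a b x)%:E < +oo)%E.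
Proof.
move=> a1 b0.
have gfle x : 0 <= x <= 1 -> gf a b x <= powR (1 - x) (b - 1).
  move=> x01; rewrite /gf ler_piMl ?powR_ge0 // powR_le1 //.
  by rewrite subr_ge0.
case: (leP 1 b) => b1.
  apply: (@le_lt_trans _ _ (\int[mu]_(x in `[0%R, 1%R]) (cst 1%:E x))%E).
    apply: ge0_le_integral => //.
    - by move=> x _; rewrite lee_fin gf_ge0.
    - by apply/measurable_EFinP; apply: measurable_funTS; exact: gf_mes.
    - move=> x; rewrite /= in_itv /= => x01.
      rewrite lee_fin (le_trans (gfle x x01)) // powR_le1 ?subr_ge0 //.
      by move: x01 => /andP[x0 x1]; rewrite x1 /= lerBlDr lerDl.
  rewrite integral_cst //= lebesgue_measure_itv /= lte_fin ltr01 mul1e.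
  by rewrite -EFinD ltry.
rewrite -integral_itv_bndo_bndc; last first.
  by apply/measurable_EFinP; apply: measurable_funTS; exact: gf_mes.
apply: (@le_lt_trans _ _ (\int[mu]_(x in `[0%R, 1%R[) (powR (1 - x) (b - 1))%:E)%E).
  apply: ge0_le_integral => //.
  - by move=> x _; rewrite lee_fin gf_ge0.
  - by apply/measurable_EFinP; apply: measurable_funTS; exact: gf_mes.
  - by apply/measurable_EFinP; apply: measurable_funTS; exact: h_mes.
  - move=> x; rewrite /= in_itv /= => /andP[x0 x1].
    by rewrite lee_fin gfle // x0 ltW.
apply: int_h_fin; last by rewrite subr_lt0.
lra.
Qed.

Lemma int_gf_ge (a b m : R) : 1 <= a -> 0 <= m ->
  (forall x, 4^-1 <= x <= 2^-1 -> m <= powR (1 - x) (b - 1)) ->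
  ((4^-1 * (powR (4^-1) (a - 1) * m))%:E <=
     \int[mu]_(x in `[0%R, 1%R]) (gf a b x)%:E)%E.
Proof.
move=> a1 m0 hm.
have q0 : (0 : R) < 4^-1 by rewrite invr_gt0 ltr0n.
have q1 : (4^-1 : R) < 2^-1 by rewrite ltf_pV2 ?posrE ?ltr0n // ltr_nat.
have h2 : (2^-1 : R) <= 1 by rewrite invf_le1 // ler1n.
apply: (@le_trans _ _ (\int[mu]_(x in `[4^-1%R, 2^-1%R]) (gf a b x)%:E)%E); last first.
  apply: ge0_subset_integral => //.
  - by apply/measurable_EFinP; apply: measurable_funTS; exact: gf_mes.
  - by move=> x _; rewrite lee_fin gf_ge0.
  - move=> x; rewrite /= !in_itv /= => /andP[h3 h4].
    by rewrite (le_trans (ltW q0) h3) (le_trans h4 h2).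
apply: (@le_trans _ _ (\int[mu]_(x in `[4^-1%R, 2^-1%R]) (cst (powR (4^-1) (a - 1) * m)%:E x))%E).
  rewrite integral_cst //= lebesgue_measure_itv /= lte_fin q1 -EFinD -EFinM lee_fin.
  rewrite mulrC ler_wpM2l ?mulr_ge0 ?powR_ge0 //.
  lra.
apply: ge0_le_integral => //.
- by move=> x _; rewrite lee_fin mulr_ge0 ?powR_ge0.
- by apply/measurable_EFinP; apply: measurable_funTS; exact: gf_mes.
- move=> x; rewrite /= in_itv /= => hx.
  rewrite lee_fin /gf ler_pM ?powR_ge0 ?hm //.
  apply: ge0_ler_powR; first by rewrite subr_ge0.
  + by rewrite nnegrE ltW.
  + by move: hx => /andP[h3 _]; rewrite nnegrE (le_trans (ltW q0) h3).
  + by move: hx => /andP[].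
Qed.
End F.


Section G.
Context {R : realType}.
Local Notation mu := (@lebesgue_measure R).

Lemma int_gf_pos (a b : R) : 1 <= a -> 0 < b ->
  (0 < \int[mu]_(x in `[0%R, 1%R]) (gf a b x)%:E)%E.
Proof.
move=> a1 b0.
set m := Num.min (powR (2^-1 : R) (b - 1)) (powR (4^-1 * 3 : R) (b - 1)).
have m0 : 0 < m by rewrite lt_min !powR_gt0 // ?invr_gt0 ?mulr_gt0 ?invr_gt0 ?ltr0n.
apply: (lt_le_trans _ (int_gf_ge a b m a1 (ltW m0) _)).
  by rewrite lte_fin !mulr_gt0 ?invr_gt0 ?ltr0n ?powR_gt0 ?invr_gt0 ?ltr0n.
move=> x /andP[x1 x2].
case: (leP 0 (b - 1)) => hb.
  rewrite ge_min; apply/orP; left.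
  apply: ge0_ler_powR => //; rewrite ?nnegrE ?invr_ge0 ?ler0n //; try lra.
rewrite ge_min; apply/orP; right.
apply: powRn_dec; [lra|lra|exact: ltW].
Qed.

Lemma bconst_pos (a b : R) : 1 <= a -> 0 < b -> 0 < beta_const a b.
Proof.
move=> a1 b0; rewrite /beta_const.
have := int_gf_pos a b a1 b0; have := int_gf_fin a b a1 b0.
rewrite /gf; case: (\int[_]_(_ in _) _)%E => //= r _; by rewrite lte_fin.
Qed.

Lemma bconstE (a b : R) : 1 <= a -> 0 < b ->
  (\int[mu]_(x in `[0%R, 1%R]) (gf a b x)%:E)%E = (beta_const a b)%:E.
Proof.
move=> a1 b0; rewrite /beta_const.
have := int_gf_pos a b a1 b0; have := int_gf_fin a b a1 b0.
rewrite /gf; case: (\int[_]_(_ in _) _)%E => //=.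
Qed.

End G.

Section BetaP.
Context {R : realType}.
Local Notation mu := (@lebesgue_measure R).
Variables (a b : R) (a1 : 1 <= a) (b0 : 0 < b).

Definition bM (A : set R) : \bar R :=
  (\int[mu]_(x in A `&` `[0%R, 1%R]) (beta_density a b x)%:E)%E.

Let dens_ge0 x : 0 <= beta_density a b x.
Proof. by rewrite /beta_density divr_ge0 ?mulr_ge0 ?powR_ge0 // ltW // bconst_pos. Qed.

Let dens_mes : measurable_fun setT (beta_density a b).
Proof.
rewrite /beta_density; apply: measurable_funM; first exact: (gf_mes a b).
exact: measurable_cst.
Qed.

Let bM0 : bM set0 = 0%E.
Proof. by rewrite /bM set0I integral_set0. Qed.

Let bM_ge0 A : (0 <= bM A)%E.
Proof. by apply: integral_ge0 => x _; rewrite lee_fin. Qed.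

Let bM_sigma : semi_sigma_additive bM.
Proof.
move=> /= F mF tF mUF; rewrite /bM; apply: cvg_toP.
  apply: ereal_nondecreasing_is_cvgn => m n mn.
  apply: lee_sum_nneg_natr => // k _ _; apply: integral_ge0 => /= x _.
  by rewrite lee_fin.
rewrite setI_bigcupl ge0_integral_bigcup//=.
- by move=> k; apply: measurableI; [exact: mF | exact: measurable_itv].
- by apply/measurable_EFinP; apply: measurable_funTS; exact: dens_mes.
- by move=> x _; rewrite lee_fin.
- apply/trivIsetP => i j _ _ ij.
  move/trivIsetP : tF => /(_ i j I I ij) Fij.
  by rewrite setIACA Fij set0I.
Qed.

HB.instance Definition _ := isMeasure.Build _ _ _ bM bM0 bM_ge0 bM_sigma.

Let bM_setT : bM setT = 1%E.
Proof.
rewrite /bM setTI.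
under eq_integral do rewrite /beta_density EFinM.
rewrite ge0_integralZr //; last 2 first.
- by move=> x _; rewrite lee_fin gf_ge0.
- by rewrite lee_fin invr_ge0 ltW // bconst_pos.
have := bconstE a b a1 b0; rewrite /gf => ->.

  by rewrite -EFinM mulfV // gt_eqF // bconst_pos.
by apply/measurable_EFinP; apply: measurable_funTS; exact: gf_mes.
Qed.

HB.instance Definition _ := @Measure_isProbability.Build _ _ R bM bM_setT.

Definition betaP : probability R R := bM.

End BetaP.


Section H.
Context {R : realType}.
Local Notation mu := (@lebesgue_measure R).

Definition epsK (K : nat) : R := expR (- (K%:R * (1 + ln 2) + 2 * ln 2)).

Lemma epsK_gt0 K : 0 < epsK K. Proof. exact: expR_gt0. Qed.
Lemma epsK_le1 K : epsK K <= 1.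
Proof.
rewrite /epsK expR_le1 oppr_le0 addr_ge0 ?mulr_ge0 ?ler0n ?addr_ge0 ?ln_ge0 ?ler1n //.
Qed.

Lemma real_est (K : nat) (th a b : R) : (2 <= K)%N -> 2 <= th ->
  a = th / K%:R + 1 -> b = (K - 1)%:R * th / K%:R ->
  powR (epsK K) (a - 1) * epsK K /
    (4^-1 * (powR (4^-1) (a - 1) * powR (2^-1) (b - 1))) <= expR (- th).
Proof.
move=> K2 th2 ha hb.
set l := ln (2 : R).
have l0 : 0 < l by rewrite ln_gt0 // ltr1n.
have e2 : (2 : R) = expR l by rewrite lnK // posrE ltr0n.
have e2i : (2^-1 : R) = expR (- l) by rewrite expRN -e2.
have e4i : (4^-1 : R) = expR (- (2 * l)).
  by rewrite expRN expRM_natl -e2 expr2 -natrM.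
have K0 : (2 : R) <= K%:R by rewrite ler_nat.
have Kn0 : K%:R != 0 :> R by rewrite gt_eqF // (lt_le_trans _ K0).
have aK : a * K%:R = th + K%:R by rewrite ha mulrDl mulfVK // mul1r.
have bth : b - 1 <= th.
  rewrite hb natrB ?(leq_trans _ K2) // (_ : (K%:R - 1) * th / K%:R = th - th / K%:R); last by field.
  have : 0 <= th / K%:R by rewrite divr_ge0 // ?ler0n; lra.
  lra.
rewrite /epsK e4i e2i -!expRM -!expRD -expRN -expRD ler_expR.
rewrite -/l.
have h1 : a * K%:R * l = (th + K%:R) * l by rewrite aK.
have h2 : 0 <= l * (th - (b - 1)) by rewrite mulr_ge0 ?subr_ge0 // ltW.
have h3 : 0 <= K%:R * l by rewrite mulr_ge0 // ?ler0n ltW.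
nra.
Qed.
End H.


Section I.
Context {R : realType}.
Local Notation mu := (@lebesgue_measure R).

Lemma bM_est (K : nat) (th : R) : (2 <= K)%N -> 2 <= th ->
  (bM (th / K%:R + 1) ((K - 1)%:R * th / K%:R) [set` `]-oo, epsK K[ ]
     <= (expR (- th))%:E)%E.
Proof.
move=> K2 th2.
set a := th / K%:R + 1; set b := (K - 1)%:R * th / K%:R.
have K0 : (2 : R) <= K%:R by rewrite ler_nat.
have a1 : 1 <= a by rewrite /a lerDr divr_ge0 // ?ler0n; lra.
have b1 : 1 <= b.
  rewrite /b natrB ?(leq_trans _ K2) // (_ : (K%:R - 1) * th / K%:R = th - th / K%:R); last first.
    by field; rewrite gt_eqF // (lt_le_trans _ K0).
  rewrite lerBrDl -lerBrDr ler_pdivrMr; last by rewrite (lt_le_trans _ K0).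
  nra.
have b0 : 0 < b by rewrite (lt_le_trans _ b1).
set eps := epsK K.
have e0 : 0 < eps := epsK_gt0 K.
have e1 : eps <= 1 := epsK_le1 K.
set B := beta_const a b.
have B0 : 0 < B := bconst_pos a b a1 b0.
set L := 4^-1 * (powR (4^-1) (a - 1) * powR (2^-1) (b - 1)).
have L0 : 0 < L by rewrite !mulr_gt0 ?powR_gt0 // invr_gt0 ltr0n.
have LB : L <= B.
  have := int_gf_ge a b (powR (2^-1) (b - 1)) a1 (powR_ge0 _ _).
  rewrite bconstE // lee_fin; apply => x /andP[x1 x2].
  by apply: ge0_ler_powR; rewrite ?nnegrE; lra.
have S01 : measurable ([set` `]-oo, eps[ ] `&` `[0%R, 1%R] : set R).
  by apply: measurableI; exact: measurable_itv.
apply: (@le_trans _ _ ((powR eps (a - 1) / B)%:E * mu ([set` `]-oo, eps[ ] `&` `[0%R, 1%R]))%E).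
  rewrite /bM -integral_cst //.
  apply: ge0_le_integral => //.
  - by move=> x _; rewrite lee_fin /beta_density divr_ge0 ?gf_ge0 // ltW.
  - apply/measurable_EFinP; apply: measurable_funTS.
    rewrite /beta_density; apply: measurable_funM; first exact: (gf_mes a b).
    exact: measurable_cst.
  - move=> x [/=]; rewrite !in_itv /= => xe /andP[x0 x1].
    rewrite lee_fin /beta_density ler_pM2r ?invr_gt0 //.
    rewrite /gf -[leRHS]mulr1 ler_pM ?powR_ge0 //.
      by apply: ge0_ler_powR; rewrite ?nnegrE ?subr_ge0 // ltW.
    by apply: powR_le1; rewrite ?subr_ge0 //; lra.
apply: (@le_trans _ _ ((powR eps (a - 1) / B)%:E * eps%:E)%E).
  apply: lee_wpmul2l; first by rewrite lee_fin divr_ge0 ?powR_ge0 // ltW.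
  apply: (@le_trans _ _ (mu `[0%R, eps])).
    apply: le_measure => //; rewrite ?inE //; try exact: measurable_itv.
    move=> x [/=]; rewrite !in_itv /= => xe /andP[x0 x1].
    by rewrite x0 ltW.
  by rewrite lebesgue_measure_itv /= lte_fin e0 -EFinD subr0.
rewrite -EFinM lee_fin.
apply: (le_trans _ (real_est K th a b K2 th2 (erefl _) (erefl _))).
rewrite -/eps -/L mulrAC; apply: ler_wpM2l.
  by rewrite mulr_ge0 ?powR_ge0 // ltW.
by rewrite lef_pV2 // posrE.
Qed.
End I.


Section Prod.
Context {R : realType}.
Variable Q : nat -> probability R R.

Fixpoint PTd (n : nat) : {d : measure_display & measurableType d} :=
  match n with
  | 0 => existT _ _ (R : measurableType _)
  | n.+1 => existT _ _ ((projT2 (PTd n)) * R : measurableType _)%type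
  end.

Definition PT n := projT2 (PTd n).

Fixpoint PP n : probability (PT n) R :=
  match n as n return probability (PT n) R with
  | 0 => Q 0
  | n.+1 => ((PP n) \x (Q n.+1))%E : probability _ R
  end.

Fixpoint crd n : nat -> PT n -> R :=
  match n as n return nat -> PT n -> R with
  | 0 => fun _ x => x
  | n.+1 => fun i p => if i == n.+1 then p.2 else crd n i p.1
  end.

Lemma crd_mes n i : measurable_fun setT (crd n i).
Proof.
elim: n => [|n IH] /=; first exact: measurable_id.
case: (i == n.+1).
  exact: measurable_snd.
exact: (measurableT_comp IH measurable_fst).
Qed.

Lemma rect_mes n (B : nat -> set R) : (forall i, measurable (B i)) ->
  measurable [set p : PT n | forall i, (i <= n)%N -> B i (crd n i p)].
Proof.
move=> mB.
have -> : [set p : PT n | forall i, (i <= n)%N -> B i (crd n i p)] =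
  \bigcap_i (crd n i @^-1` (if (i <= n)%N then B i else setT)).
  apply/seteqP; split => p /=.
    by move=> H i _ /=; case: ifP => // /H.
  by move=> H i lin; have := H i I; rewrite /= lin.
apply: bigcapT_measurable => i.
rewrite -[X in measurable X]setTI; apply: crd_mes => //.
by case: ifP.
Qed.

Lemma PP_rect n (B : nat -> set R) : (forall i, measurable (B i)) ->
  PP n [set p : PT n | forall i, (i <= n)%N -> B i (crd n i p)] =
  (\prod_(i < n.+1) Q i (B i))%E.
Proof.
move=> mB; elim: n => [|n IH].
  rewrite big_ord1 /=; congr (Q 0 _); apply/seteqP; split => x /=.
    by move/(_ 0%N (leqnn 0)).
  by move=> Bx [|i]// _.
rewrite big_ord_recr /= -IH.
have -> : [set p : PT n.+1 | forall i, (i <= n.+1)%N -> B i (crd n.+1 i p)] =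
  [set p : PT n | forall i, (i <= n)%N -> B i (crd n i p)] `*` B n.+1.
  apply/seteqP; split => -[p x] /=.
    move=> H; split; last by have := H n.+1 (leqnn _); rewrite eqxx.
    move=> i lin; have := H i (leqW lin).
    by have -> : (i == n.+1) = false by apply/negbTE; rewrite neq_ltn ltnS lin.
  move=> [H1 H2] i; rewrite leq_eqVlt; case: eqP => [->//|ne] /= lin.
  exact: H1.
by rewrite product_measure1E //; apply: rect_mes.
Qed.


Lemma PP_single n j A : (j <= n)%N -> measurable A ->
  PP n (crd n j @^-1` A) = Q j A.
Proof.
move=> jn mA.
pose B i := if i == j then A else setT.
have mB i : measurable (B i) by rewrite /B; case: ifP.
have -> : crd n j @^-1` A = [set p : PT n | forall i, (i <= n)%N -> B i (crd n i p)].
  apply/seteqP; split => p /=.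
    by move=> Ap i _; rewrite /B; case: eqP => [->|].
  by move/(_ j jn); rewrite /B eqxx.
rewrite PP_rect // (bigD1 (Ordinal (jn : (j < n.+1)%N))) //= /B eqxx big1 ?mule1 //.
move=> i /negbTE; rewrite -val_eqE /= => ->.
exact: probability_setT.
Qed.

Lemma PP_indep n : mutually_independent (PP n) (fun i : 'I_n.+1 => crd n i).
Proof.
split; first by move=> i; exact: crd_mes.
move=> B mB.
pose B' k := if (k < n.+1)%N then B (inord k) else setT.
have mB' k : measurable (B' k) by rewrite /B'; case: ifP.
have -> : \bigcap_(i in [set: 'I_n.+1]) (crd n i @^-1` B i) =
    [set p : PT n | forall i, (i <= n)%N -> B' i (crd n i p)].
  apply/seteqP; split => p /=.
    move=> H i lin; rewrite /B' ltnS lin.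
    have := H (inord i) I; by rewrite /= inordK.
  move=> H i _ /=; have := H i (ltn_ord i).
  by rewrite /B' ltn_ord inord_val.
rewrite PP_rect //; apply: eq_bigr => i _.
have iln : (i <= n)%N by rewrite -ltnS ltn_ord.
rewrite PP_single //.
by rewrite /B' ltn_ord inord_val.
Qed.
End Prod.


Section J.
Context {R : realType}.

Lemma mes_pre d (T : measurableType d) (f : T -> R) (i : interval R) :
  measurable_fun setT f -> measurable (f @^-1` [set` i]).
Proof.
move=> mf; rewrite -[X in measurable X]setTI; exact: (mf measurableT _ (measurable_itv i)).
Qed.

Lemma stick_mes d (T : measurableType d) (V : nat -> T -> R) k :
  (forall j, measurable_fun setT (V j)) -> measurable_fun setT (stick V k).
Proof.
move=> mV; rewrite /stick; apply: measurable_funM => //.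
apply: measurable_prod => l _.
exact: measurable_funB.
Qed.

Lemma stick_sum_mes d (T : measurableType d) (V : nat -> T -> R) r :
  (forall j, measurable_fun setT (V j)) ->
  measurable_fun setT (fun w => \sum_(i < r) stick V i w).
Proof.
move=> mV; apply: measurable_sum => i; exact: stick_mes.
Qed.

Lemma betaPE (a b : R) pa pb A : betaP a b pa pb A = bM a b A.
Proof. by []. Qed.

Lemma key (r : nat) (hr : (1 <= r)%N) (J : nat -> 'rV[R]_r -> \bar R) :
  (forall K : nat, (r < K)%N ->
     forall mu : R -> set 'rV[R]_r -> \bar R,
       (forall theta : R, 0 < theta -> is_law_Y K r theta (mu theta)) ->
       LDP_on (simplex r) mu (J K)) ->
  forall K, (r < K)%N -> (1 <= J K (0%R : 'rV[R]_r))%E.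
Proof.
move=> HJ K rK.
have K2 : (2 <= K)%N by apply: leq_ltn_trans hr rK.
case: K rK K2 => [|[|n]] // rK _.
pose Kr : R := (n.+2)%:R.
pose ap (th : R) := Num.max (th / Kr + 1) 1.
pose bp (th : R) (j : nat) :=
  if 0 < (n.+2 - j.+1)%:R * th / Kr then (n.+2 - j.+1)%:R * th / Kr else 1.
have hap th : 1 <= ap th by rewrite /ap le_max lexx orbT.
have hbp th j : 0 < bp th j by rewrite /bp; case: ifP.
pose Q th j : probability R R := betaP (ap th) (bp th j) (hap th) (hbp th j).
pose V := fun j => @crd R n j.
pose mu := fun th A => PP (Q th) n (stick_vec r V @^-1` A).
have law : forall th, 0 < th -> is_law_Y n.+2 r th (mu th).
  move=> th th0.
  exists (projT1 (PTd n)), (PT n), (PP (Q th) n), V.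
  refine (conj _ _).
    exact: (PP_indep (Q th) n).
  refine (conj _ _); last first.
    move=> A. reflexivity.
  move=> j jn A mA. rewrite /V.
  have jn' : (j <= n)%N by rewrite -ltnS.
  rewrite (PP_single (Q th) n j A jn' mA).
  rewrite /Q betaPE.
  have -> : ap th = th / Kr + 1.
    rewrite /ap max_l // lerDr divr_ge0 ?ler0n //; exact: ltW.
  have -> : bp th j = (n.+2 - j.+1)%:R * th / Kr.
    rewrite /bp ifT //; apply: divr_gt0; last by rewrite ltr0n.
    by rewrite mulr_gt0 // ltr0n subn_gt0.
  reflexivity.
have [_ _ _ Hlow] := HJ n.+2 rK mu law.
set eps := epsK (R:=R) n.+2.
pose i0 : 'I_r := Ordinal hr.
pose G := [set y : 'rV[R]_r | y ord0 i0 < eps].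
have oG : open G.
  have -> : G = (fun y : 'rV[R]_r => y ord0 i0) @^-1` [set x | x < eps] by [].
  apply: open_comp; last exact: open_lt.
  by move=> y _; exact: coord_continuous.
have H1 := Hlow G oG.
have svE w i : stick_vec r V w ord0 i = stick V i w by rewrite /stick_vec mxE.
have mV j : measurable_fun setT (V j) by exact: crd_mes.
have mW : measurable (stick_vec r V @^-1` (G `&` simplex r)).
  have -> : stick_vec r V @^-1` (G `&` simplex r) =
    (stick V 0 @^-1` [set` `]-oo, eps[ ]) `&`
    (\bigcap_(k in [set k | (k < r)%N]) (stick V k @^-1` [set` `[0%R, +oo[ ])) `&`
    ((fun w => \sum_(i < r) stick V i w) @^-1` [set` `]-oo, 1%R] ]).
    apply/seteqP; split => w /=.
      rewrite /G /simplex /= svE => -[Gw [nn s1]].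
      split; [split|].
      - by rewrite in_itv /=.
      - move=> k /= kr; rewrite in_itv /= andbT.
        by have := nn (Ordinal kr); rewrite svE.
      - rewrite in_itv /=; under eq_bigr do rewrite -svE; exact: s1.
    move=> [[Gw nn] s1]; rewrite in_itv /= in Gw; rewrite in_itv /= in s1.
    rewrite /G /simplex /= svE; split => //; split.
      by move=> i; rewrite svE; have := nn i (ltn_ord i); rewrite /= in_itv /= andbT.
    by under eq_bigr do rewrite svE.
  apply: measurableI; first apply: measurableI.
  - by apply: mes_pre; apply: stick_mes.
  - by apply: bigcap_measurableType => k _; apply: mes_pre; apply: stick_mes.
  - by apply: mes_pre; apply: stick_sum_mes.
have est th : 2 <= th -> (mu th (G `&` simplex r) <= (expR (- th))%:E)%E.
  move=> th2; have th0 : 0 < th by lra.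
  rewrite /mu.
  apply: (@le_trans _ _ (PP (Q th) n (crd n 0 @^-1` [set` `]-oo, eps[ ]))).
    apply: le_measure; rewrite ?inE.
    - exact: mW.
    - by apply: mes_pre; exact: crd_mes.
    - move=> w /= [Gw _]; move: Gw; rewrite /G /= svE /stick big_ord0 mulr1.
      by rewrite in_itv.
  rewrite (PP_single (Q th) n 0 _ (leq0n n) (measurable_itv _)) /Q betaPE.
  have -> : ap th = th / Kr + 1.
    rewrite /ap max_l // lerDr divr_ge0 ?ler0n //; exact: ltW.
  have -> : bp th 0 = (n.+2 - 1)%:R * th / Kr.
    rewrite /bp ifT //; apply: divr_gt0; last by rewrite ltr0n.
    by rewrite mulr_gt0 // ltr0n subn_gt0.
  exact: (@bM_est R n.+2 th erefl th2).
have sl th : 2 <= th -> (scaled_log mu (G `&` simplex r) th <= - 1%E)%E.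
  move=> th2; have th0 : 0 < th by lra.
  rewrite /scaled_log.
  have m0 : (0 <= mu th (G `&` simplex r))%E by exact: measure_ge0.
  have l1 : (lne (mu th (G `&` simplex r)) <= (- th)%:E)%E.
    have -> : ((- th)%:E = lne (expR (- th))%:E)%E by rewrite lne_EFin ?expR_gt0 // expRK.
    rewrite lee_lne ?est //.
      by rewrite in_itv /= m0 leey.
    by rewrite in_itv /= lee_fin expR_ge0 leey.
  apply: (@le_trans _ _ ((th^-1)%:E * (- th)%:E)%E).
    by apply: lee_wpmul2l => //; rewrite lee_fin invr_ge0 ltW.
  by rewrite -EFinM mulrN mulVf ?gt_eqF.
have Lf : (limf_einf (scaled_log mu (G `&` simplex r)) (pinfty_nbhs R) <= - 1%E)%E.
  rewrite limf_einfE; apply: ub_ereal_sup => _ [W [M [Mr HM]] <-].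
  pose th := Num.max M 2 + 1.
  have thM : M < th by rewrite /th ltr_pwDr ?ltr01 // le_max lexx.
  have th2 : 2 <= th by rewrite /th ler_wpDr ?ler01 // le_max lexx orbT.
  apply: le_trans (sl th th2).
  by apply: ereal_inf_lbound; exists th => //; exact: HM.
have Hinf : (1 <= ereal_inf (J n.+2 @` (G `&` simplex r)))%E.
  by rewrite -leeN2; apply: le_trans H1 Lf.
apply: le_trans Hinf _.
apply: ereal_inf_lbound; exists 0%R => //.
split.
  by rewrite /G /= mxE; exact: epsK_gt0.
split.
  by move=> i; rewrite mxE.
by rewrite big1 ?ler01 // => i _; rewrite mxE.
Qed.
End J.


Theorem theorem2p5 (R : realType) (r : nat) (hr : (1 <= r)%N)
  (J : nat -> 'rV[R]_r -> \bar R) :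
  (forall K : nat, (r < K)%N ->
     forall mu : R -> set 'rV[R]_r -> \bar R,
       (forall theta : R, 0 < theta -> is_law_Y K r theta (mu theta)) ->
       LDP_on (simplex r) mu (J K)) ->
  exists2 x : 'rV[R]_r, simplex r x & ~ ((fun K => J K x) @ \oo --> S_rate x).
Proof.
move=> HJ; exists 0.
  split; first by move=> i; rewrite mxE.
  by rewrite big1 ?ler01 // => i _; rewrite mxE.
move=> cv.
have S0 : S_rate (0 : 'rV[R]_r) = 0%E.
  rewrite /S_rate big1 ?ltr01; last by move=> i _; rewrite mxE.
  by rewrite subr0 invr1 ln1.
rewrite S0 in cv.
have : (1 <= 0 :> \bar R)%E.
  apply: (cvge_to_ge cv).
  exists r.+1 => // K /= rK.
  exact: (key r hr J HJ K rK).
by rewrite lee_fin ler10.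
Qed.
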